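(* Let $\delta=10^{-10}$, let $k\ge\delta^{-2}$ be an integer, and let $G$ be a graph on $n\le(1+\delta)k$ vertices with average degree $d(G)>k-1$. Set $a:=n-k$ and let $b$ be the number of vertices of $G$ of degree at most $\frac{2k}{3}+a$. Suppose that the maximum degree satisfies $\Delta(G)<k+b$. Then more than $k/6$ vertices of $G$ have degree at least $k$.
   Context: The average degree of a graph $G$ is $d(G)=2|E(G)|/|V(G)|$; $\Delta(G)$ is the maximum degree. *)

(* Defs.v *)
From mathcomp Require Import all_boot all_order all_algebra.
Set Implicit Arguments. Unset Strict Implicit. Unset Printing Implicit Defensive.
Import Order.TTheory GRing.Theory Num.Theory.

Definition simple_graph (T : finType) (e : rel T) : Prop :=
  symmetric e /\ irreflexive e.

Definition deg (T : finType) (e : rel T) (v : T) : nat := #|[set u | e v u]|.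

Definition nedges (T : finType) (e : rel T) : nat := (\sum_(v : T) deg e v) %/ 2.

Definition avg_deg (T : finType) (e : rel T) : rat :=
  ((2 * nedges e)%:R / (#|T|)%:R)%R.

Definition max_deg (T : finType) (e : rel T) : nat := \max_(v : T) deg e v.

Definition delta : rat := ((10 ^+ 10)%R)^-1%R.

(* Main.v *)
Require Import Defs.
From mathcomp Require Import all_boot all_order all_algebra.
From mathcomp Require Import lra.
Import Order.TTheory GRing.Theory Num.Theory.

Lemma sum_ind_card (T : finType) (A : {set T}) :
  (\sum_(v : T) ((v \in A)%:R : rat) = (#|A|)%:R)%R.
Proof.
rewrite -sumr_const [RHS]big_mkcond /=.
by apply: eq_bigr => v _; case: (v \in A).
Qed.

Lemma delta_facts : exists y : rat, delta = (y^-1)%R /\ (100 <= y)%R.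
Proof.
exists ((10:rat)^+10)%R; split; first reflexivity.
have -> : ((10:rat)^+10 = 10^+2 * 10^+8)%R by rewrite -exprD.
have h8 : (1 <= (10:rat) ^+ 8)%R by apply: exprn_ege1; lra.
have -> : ((10:rat) ^+ 2 = 100)%R by rewrite expr2; lra.
move: h8; generalize ((10:rat)^+8)%R => x h8; nra.
Qed.

Lemma sum_const_T (T : finType) (x : rat) : (\sum_(v : T) x = x *+ #|T|)%R.
Proof. by rewrite sumr_const cardE. Qed.

Lemma arith0 (k : rat) : (10000 <= k)%R -> (k - 1 < 0)%R -> False.
Proof. move=> h1 h2. lra. Qed.

Lemma arith1 (k a h b S x n : rat) : (10000 <= k)%R -> (a <= k / 100)%R ->
  ((k - 1) * n < x)%R -> (x <= S)%R ->
  (S <= (k - 1) * n + h * b - b * (k / 3 - a - 1))%R -> (0 <= b)%R ->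
  (k / 6 < h)%R.
Proof.
move=> h1 h2 h3 h4 h5 h6.
have hpos : (0 < b * (h - (k / 3 - a - 1)))%R by lra.
rewrite ltNge; apply/negP => hh.
have : (b * (h - (k / 3 - a - 1)) <= 0)%R.
  by apply: mulr_ge0_le0; lra.
lra.
Qed.

Theorem mainTheorem4 (T : finType) (e : rel T) (k : nat) :
  simple_graph e ->
  (delta ^-1 ^+ 2 <= k%:R)%R ->
  ((#|T|)%:R <= (1 + delta) * k%:R)%R ->
  (k%:R - 1 < avg_deg e)%R ->
  let a : rat := ((#|T|)%:R - k%:R)%R in
  let b : nat := #|[set v : T | (((deg e v)%:R : rat) <= 2%:R * k%:R / 3%:R + a)%R]| in
  (max_deg e < k + b)%N ->
  ((k%:R / 6%:R : rat) < (#|[set v : T | (k <= deg e v)%N]|)%:R)%R.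
Proof.
move=> _ hk hn havg a b hmax.
have [y [hdel hy]] := delta_facts.
rewrite hdel in hk hn; clear hdel.
have y0 : (y != 0)%R by apply/negP => /eqP y0; move: hy; rewrite y0; lra.
have hdy : (y^-1 * y = 1)%R by rewrite mulVf.
have hd0 : (0 <= y^-1)%R by rewrite invr_ge0; lra.
have hk2 : (y ^+ 2 <= k%:R)%R by rewrite invrK in hk.
have hkb : (10000 <= (k%:R : rat))%R by rewrite expr2 in hk2; nra.
have hdk : (y^-1 * k%:R <= k%:R / 100)%R by nra.
have ha : (a <= k%:R / 100)%R by rewrite /a; lra.
set h := #|[set v : T | (k <= deg e v)%N]|.
set c : rat := (k%:R / 3%:R - a - 1)%R.
have hv : forall v, (((deg e v)%:R : rat) <=
   (k%:R - 1 + (v \in [set v : T | (k <= deg e v)%N])%:R * b%:R)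
   - (v \in [set v : T | (((deg e v)%:R : rat) <= 2%:R * k%:R / 3%:R + a)%R])%:R * c)%R.
  move=> v; rewrite !inE /c.
  have hm : (deg e v < k + b)%N by apply: leq_ltn_trans hmax; apply: leq_bigmax.
  case: (leqP k (deg e v)) => hH;
    case: (boolP (((deg e v)%:R : rat) <= 2%:R * k%:R / 3%:R + a)%R) => hB /=;
    rewrite ?mul1r ?mul0r ?subr0 ?addr0.
  - have : ((k%:R : rat) <= (deg e v)%:R)%R by rewrite ler_nat.
    lra.
  - have : (((deg e v).+1)%:R <= ((k + b)%:R : rat))%R by rewrite ler_nat.
    rewrite natrD -addn1 natrD; lra.
  - have : (((deg e v).+1)%:R <= ((k)%:R : rat))%R by rewrite ler_nat.
    rewrite -addn1 natrD; lra.
  - have : (((deg e v).+1)%:R <= ((k)%:R : rat))%R by rewrite ler_nat.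
    rewrite -addn1 natrD; lra.
have hsum := @ler_sum _ _ (index_enum T) xpredT _ _ (fun v _ => hv v).
rewrite -natr_sum sumrB big_split /= -!mulr_suml !sum_ind_card sum_const_T -/b -/h in hsum.
rewrite ?mul1r -[(_ *+ #|T|)%R]mulr_natr in hsum.
clear hv hk hk2 hn hdy hd0 hdk y0.
have hn0 : (0 < #|T|)%N.
  rewrite lt0n; apply/negP => /eqP h0.
  move: havg; rewrite /avg_deg h0 invr0 mulr0 => havg.
  clear - hkb havg; lra.
have hS : ((2 * nedges e)%:R <= ((\sum_(v : T) deg e v)%:R : rat))%R.
  rewrite ler_nat /nedges mulnC; exact: leq_divM.
have hn0' : (0 < (#|T|)%:R :> rat)%R by rewrite ltr0n.
move: havg; rewrite /avg_deg (ltr_pdivlMr _ _ hn0') => havg.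
have hb0 : (0 <= (b%:R : rat))%R by apply: ler0n.
have hpos : (0 < b%:R * (h%:R - c) :> rat)%R.
  clear - hsum havg hS; lra.
rewrite ltNge; apply/negP => hh.
have : (b%:R * (h%:R - c) <= 0 :> rat)%R.
  apply: mulr_ge0_le0; first exact: hb0.
  rewrite /c; clear - hh ha hkb; lra.
clear - hpos; lra.
Qed.
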